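(* Let $\alpha_1,\dots,\alpha_n\in\mathbb R$, $f(t)=\prod_{j=1}^n(t-\alpha_j)$, $N\ge1$, and for $i=1,\dots,N$ let $A_i\neq0$ and $b_i,c_i\in\mathbb R\setminus\{\alpha_1,\dots,\alpha_n\}$ with $f(b_i)=f(c_i)$, such that all $b_i,c_j$ ($i\neq j$) satisfy $b_i\neq c_j$, $b_i\neq b_j$, $c_i\neq c_j$. Put $B_{i,j}=\frac{b_i-\alpha_j}{c_i-\alpha_j}$, $Z_{i,j}=\frac{(b_i-b_j)(c_i-c_j)}{(b_i-c_j)(c_i-b_j)}$ for $i\neq j$, $f_i(\mathbf s)=A_i\prod_{j=1}^nB_{i,j}^{\mathbf s_j}$ for $\mathbf s\in\mathbb Z^n$, and $$\tau(\mathbf s)=\sum_{T\subseteq[N]}\ \prod_{\{i<j\}\subseteq T}Z_{i,j}\ \prod_{i\in T}f_i(\mathbf s).$$ Fix $k\in[N]$. Let $\tau^{(b_k\leftrightarrow c_k)}$ denote the function obtained by the same formula after interchanging the values of $b_k$ and $c_k$, and let $\tau^{\mathrm{adj}}$ denote the function obtained by the same formula after replacing $A_j$ by $A_j/Z_{k,j}$ for every $j\neq k$ and $A_k$ by $1/A_k$ (keeping all $b_i,c_i$). Then for all $\mathbf s\in\mathbb Z^n$, $$\tau^{(b_k\leftrightarrow c_k)}(\mathbf s)=\frac{A_k}{\prod_{j=1}^nB_{k,j}^{\mathbf s_j}}\ \tau^{\mathrm{adj}}(\mathbf s).$$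
   Context: $[N]=\{1,\dots,N\}$. Note $Z_{i,j}=Z_{j,i}$. *)

(* Defs.v *)
From mathcomp Require Import all_boot all_order all_algebra.
From mathcomp Require Import reals.
Set Implicit Arguments. Unset Strict Implicit. Unset Printing Implicit Defensive.
Import Order.TTheory GRing.Theory Num.Theory.
Local Open Scope ring_scope.

Section Defs.
Variables (R : realType) (n N : nat).

Definition fpoly (alpha : 'I_n -> R) (t : R) : R := \prod_(j < n) (t - alpha j).

Definition Bc (alpha : 'I_n -> R) (b c : 'I_N -> R) (i : 'I_N) (j : 'I_n) : R :=
  (b i - alpha j) / (c i - alpha j).

Definition Zc (b c : 'I_N -> R) (i j : 'I_N) : R :=
  ((b i - b j) * (c i - c j)) / ((b i - c j) * (c i - b j)).

Definition fi (alpha : 'I_n -> R) (A b c : 'I_N -> R) (s : 'I_n -> int)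
  (i : 'I_N) : R :=
  A i * \prod_(j < n) (Bc alpha b c i j) ^ (s j).

Definition tau (alpha : 'I_n -> R) (A b c : 'I_N -> R) (s : 'I_n -> int) : R :=
  \sum_(T : {set 'I_N})
     (\prod_(i in T) \prod_(j in T | (i < j)%N) Zc b c i j) *
     \prod_(i in T) fi alpha A b c s i.

Definition swapb (b c : 'I_N -> R) (k : 'I_N) : 'I_N -> R :=
  fun i => if i == k then c k else b i.

Definition Aadj (A b c : 'I_N -> R) (k : 'I_N) : 'I_N -> R :=
  fun j => if j == k then 1 / A k else A j / Zc b c k j.

End Defs.

(* Main.v *)
Require Import Defs.
From mathcomp Require Import all_boot all_order all_algebra.
From mathcomp Require Import reals.
From mathcomp Require Import ring.
Import Order.TTheory GRing.Theory Num.Theory.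
Local Open Scope ring_scope.

Lemma pairprod_U1 (R : fieldType) N (Z : 'I_N -> 'I_N -> R)
  (Zsym : forall i j, Z i j = Z j i) (S : {set 'I_N}) k : k \notin S ->
 \prod_(i in k |: S) \prod_(j in k |: S | (i < j)%N) Z i j =
 (\prod_(i in S) \prod_(j in S | (i < j)%N) Z i j) * \prod_(j in S) Z k j.
Proof.
move=> kS.
under eq_bigr => i _ do rewrite big_mkcondr (big_setU1 _ kS) -big_mkcondr /=.
rewrite (big_setU1 _ kS) /= ltnn mul1r.
rewrite big_split /=.
rewrite [X in _ = _ * X](bigID (fun j : 'I_N => (j < k)%N)) /=.
rewrite -big_mkcondr /=.
rewrite (eq_bigr (fun i => Z k i) (fun i _ => Zsym i k)).
rewrite [X in _ = _ * (_ * X)](eq_bigl (fun j => (j \in S) && (k < j)%N)).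
  by ring.
move=> j /=; case jS: (j \in S) => //=.
have kj : (k != j) by apply/eqP => E; rewrite E jS in kS.
have kj' : (nat_of_ord k != nat_of_ord j) by [].
rewrite -leqNgt leq_eqVlt (negbTE kj').
done.
Qed.

Theorem proposition8p8 (R : realType) (n N : nat) (alpha : 'I_n -> R)
  (A b c : 'I_N -> R)
  (hA : forall i, A i != 0)
  (hb : forall i j, b i != alpha j)
  (hc : forall i j, c i != alpha j)
  (hf : forall i, fpoly alpha (b i) = fpoly alpha (c i))
  (hdist : forall i j, i != j -> [/\ b i != c j, b i != b j & c i != c j])
  (k : 'I_N) (s : 'I_n -> int) :
  tau alpha A (swapb b c k) (swapb c b k) s =
  A k / (\prod_(j < n) (Bc alpha b c k j) ^ (s j)) *
  tau alpha (Aadj A b c k) b c s.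
Proof.
set g := \prod_(j < n) (Bc alpha b c k j) ^ (s j).
set sb := swapb b c k. set sc := swapb c b k.
have hB0 i j : Bc alpha b c i j != 0.
  by rewrite /Bc mulf_neq0 ?invr_neq0 // subr_eq0.
have hg : g != 0 by apply/prodf_neq0 => j _; exact: expfz_neq0.
have hZ0 j : j != k -> Zc b c k j != 0.
  move=> hj; have hkj : k != j by rewrite eq_sym.
  have [h1 h2 h3] := hdist k j hkj.
  have [h4 _ _] := hdist j k hj.
  by rewrite /Zc mulf_neq0 ?invr_neq0 ?mulf_neq0 // subr_eq0 // eq_sym.
have Zsym (bb cc : 'I_N -> R) i j : Zc bb cc i j = Zc bb cc j i.
  by rewrite /Zc; congr (_ / _); ring.
have Zsw_same i j : i != k -> j != k -> Zc sb sc i j = Zc b c i j.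
  by move=> hi hj; rewrite /Zc /sb /sc /swapb (negbTE hi) (negbTE hj).
have Zsw_k j : j != k -> Zc sb sc k j = (Zc b c k j)^-1.
  by move=> hj; rewrite /Zc /sb /sc /swapb eqxx (negbTE hj) invf_div; congr (_ / _); ring.
have fsw_same i : i != k -> fi alpha A sb sc s i = fi alpha A b c s i.
  by move=> hi; rewrite /fi /Bc /sb /sc /swapb (negbTE hi).
have fsw_k : fi alpha A sb sc s k = A k / g.
  rewrite /fi /g; congr (_ * _); rewrite -prodfV; apply: eq_bigr => j _.
  by rewrite expfV /Bc /sb /sc /swapb !eqxx invf_div.
have fadj_k : fi alpha (Aadj A b c k) b c s k = (1 / A k) * g.
  by rewrite /fi /Aadj eqxx.
have fadj i : i != k -> fi alpha (Aadj A b c k) b c s i = fi alpha A b c s i / Zc b c k i.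
  by move=> hi; rewrite /fi /Aadj (negbTE hi) mulrAC.
pose h (T : {set 'I_N}) := if k \in T then T :\ k else k |: T.
have hK : cancel h h.
  move=> T; rewrite /h; case kT: (k \in T).
    by rewrite setD11 setD1K.
  by rewrite setU11 setU1K ?kT.
have hinj : injective h := can_inj hK.
rewrite /tau [in RHS](reindex_inj hinj) mulr_sumr; apply: eq_bigr => T _.
have memS (S : {set 'I_N}) i : k \notin S -> i \in S -> i != k.
  by move=> kS iS; apply/eqP => E; rewrite -E iS in kS.
have PS (S : {set 'I_N}) : k \notin S ->
    \prod_(i in S) \prod_(j in S | (i < j)%N) Zc sb sc i j =
    \prod_(i in S) \prod_(j in S | (i < j)%N) Zc b c i j.
  move=> kS; apply: eq_bigr => i iS; apply: eq_bigr => j /andP[jS _].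
  by apply: Zsw_same; [exact: (memS _ _ kS iS) | exact: (memS _ _ kS jS)].
have FS (S : {set 'I_N}) : k \notin S ->
    \prod_(i in S) fi alpha A sb sc s i = \prod_(i in S) fi alpha A b c s i.
  by move=> kS; apply: eq_bigr => i iS; apply: fsw_same; exact: (memS _ _ kS iS).
have FadjS (S : {set 'I_N}) : k \notin S ->
    \prod_(i in S) fi alpha (Aadj A b c k) b c s i =
    \prod_(i in S) fi alpha A b c s i * (\prod_(i in S) Zc b c k i)^-1.
  move=> kS; rewrite -prodfV -big_split /=; apply: eq_bigr => i iS.
  by rewrite fadj //; exact: (memS _ _ kS iS).
have ZS (S : {set 'I_N}) : k \notin S ->
    \prod_(j in S) Zc sb sc k j = (\prod_(j in S) Zc b c k j)^-1.
  move=> kS; rewrite -prodfV; apply: eq_bigr => i iS.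
  by rewrite Zsw_k //; exact: (memS _ _ kS iS).
have ZS0 (S : {set 'I_N}) : k \notin S -> \prod_(j in S) Zc b c k j != 0.
  by move=> kS; apply/prodf_neq0 => i iS; apply: hZ0; exact: (memS _ _ kS iS).
rewrite /h; case kT: (k \in T).
  have eT : T = k |: (T :\ k) by rewrite setD1K.
  have := setD11 k T; move/negbT.
  move: eT; set U := T :\ k; clearbody U => eT kU; rewrite eT.
  rewrite (@pairprod_U1 _ _ _ (Zsym sb sc) _ _ kU) (big_setU1 _ kU) /= fsw_k.
  rewrite (PS _ kU) (FS _ kU) (FadjS _ kU) (ZS _ kU).
  move: (\prod_(i in U) \prod_(j in U | (i < j)%N) Zc b c i j) (\prod_(j in U) Zc b c k j)
    (\prod_(i in U) fi alpha A b c s i) (A k / g) => P Z F a.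
  by ring.
have kS : k \notin T by rewrite kT.
rewrite (@pairprod_U1 _ _ _ (Zsym b c) _ _ kS) (big_setU1 _ kS) /= fadj_k.
rewrite (PS _ kS) (FS _ kS) (FadjS _ kS).
have := ZS0 _ kS; have := hA k.
move: (\prod_(i in T) \prod_(j in T | (i < j)%N) Zc b c i j) (\prod_(j in T) Zc b c k j)
    (\prod_(i in T) fi alpha A b c s i) (A k); clear fsw_k fadj_k; clearbody g.
move=> P z F a hAk hz.
by field; rewrite hAk hg hz.
Qed.
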